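(* Assume the standing hypotheses (H). Then $\alpha(G)\le 4$, i.e., every part of $G$ has at most $4$ vertices.
   Context: $\alpha(G)$ is the independence number. A list assignment $L$ assigns to each vertex $v$ a set $L(v)$ of colors; an $L$-coloring is a proper coloring $f$ with $f(v)\in L(v)$ for all $v$; $\mathrm{ch}$ denotes choice number and $\chi$ chromatic number. A part of a complete multipartite graph is one of its maximal stable sets. Standing hypotheses (H): $k\ge1$ and $n\ge 2k+2$ are integers; $G$ is a complete $k$-partite graph (exactly $k$ nonempty parts) on $n$ vertices; $L$ is a list assignment for $G$ with $|L(v)|\ge\lceil (n+k-1)/3\rceil$ for every vertex $v$; $G$ has no $L$-coloring; $\left|\bigcup_{v\in V(G)}L(v)\right|\le n-1$; and every graph $H$ with fewer than $n$ vertices satisfies $\mathrm{ch}(H)\le\max\{\chi(H),\lceil(|V(H)|+\chi(H)-1)/3\rceil\}$. *)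

(* Defs.v *)
From mathcomp Require Import all_boot.
Set Implicit Arguments. Unset Strict Implicit. Unset Printing Implicit Defensive.

Definition simple_graph (T : finType) (e : rel T) : Prop :=
  irreflexive e /\ symmetric e.

Definition proper_coloring (T : finType) (C : eqType) (e : rel T) (f : T -> C) : Prop :=
  forall x y, e x y -> f x != f y.

(* List assignments: colours are natural numbers, L v is a list of colours;
   its size |L(v)| is the number of distinct colours in it. *)
Definition list_size (s : seq nat) : nat := size (undup s).

Definition L_colorable (T : finType) (e : rel T) (L : T -> seq nat) : Prop :=
  exists f : T -> nat, proper_coloring e f /\ forall v, f v \in L v.

Definition choosable (T : finType) (e : rel T) (m : nat) : Prop :=
  forall L : T -> seq nat, (forall v, m <= list_size (L v)) -> L_colorable e L.

Definition k_colorable (T : finType) (e : rel T) (k : nat) : bool :=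
  [exists f : {ffun T -> 'I_k}, [forall x, [forall y, e x y ==> (f x != f y)]]].

(* Chromatic number: least k (k <= #|T| always works) such that e is
   k-colourable. *)
Definition chi (T : finType) (e : rel T) : nat :=
  find (k_colorable e) (iota 0 #|T|.+1).

Definition stable (T : finType) (e : rel T) (S : {set T}) : bool :=
  [forall x in S, forall y in S, ~~ e x y].

Definition alpha (T : finType) (e : rel T) : nat :=
  \max_(S : {set T} | stable e S) #|S|.

(* e is a complete k-partite graph with exactly k nonempty parts:
   the parts are the fibres of a surjection p onto 'I_k, and two vertices are
   adjacent iff they lie in different parts. *)
Definition complete_multipartite (T : finType) (e : rel T) (k : nat) : Prop :=
  exists p : T -> 'I_k,
    (forall i : 'I_k, exists x, p x = i) /\ (forall x y, e x y = (p x != p y)).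

Definition ceil3 (a : nat) : nat := (a + 2) %/ 3.

Definition ohba_bound (T : finType) (e : rel T) : nat :=
  maxn (chi e) (ceil3 (#|T| + chi e - 1)).

(* Main.v *)
Require Import Defs.
From mathcomp Require Import all_boot.
From mathcomp Require Import zify.

Lemma find_le_index (X : eqType) (a : pred X) (s : seq X) x :
  x \in s -> a x -> find a s <= index x s.
Proof.
elim: s => [//|y s IH] /=; rewrite inE => /orP [/eqP -> ->|xs ax] //.
case ay: (a y) => //; case: eqP => [eyx|_ /=]; last exact: IH.
by move: eyx ay => -> ; rewrite ax.
Qed.

Lemma chi_le (T : finType) (e : rel T) k : k_colorable e k -> chi e <= k.
Proof.
move=> hk; rewrite /chi.
case: (leqP k #|T|) => hkT.
  have hin : k \in iota 0 #|T|.+1 by rewrite mem_iota /= ltnS.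
  have := @find_le_index nat (k_colorable e) _ _ hin hk.
  have hi : index k (iota 0 #|T|.+1) = k.
    have := nth_index 0 hin; rewrite nth_iota; first by rewrite add0n.
    by have := index_mem k (iota 0 #|T|.+1); rewrite hin size_iota.
  by rewrite hi.
apply: leq_trans (find_size _ _) _; rewrite size_iota; lia.
Qed.

Lemma list_size_filter (s : seq nat) c :
  list_size s <= (list_size [seq x <- s | x != c]).+1.
Proof.
rewrite /list_size -filter_undup size_filter.
have := count_predC (predC1 c) (undup s).
have : count (predC (predC1 c)) (undup s) <= 1.
  have -> : count (predC (predC1 c)) (undup s) = count (pred1 c) (undup s).
    by apply: eq_count => x /=; rewrite negbK.
  rewrite count_uniq_mem ?undup_uniq //; by case: (c \in _).
have -> : count (fun x => x != c) (undup s) = count (predC1 c) (undup s) by [].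
lia.
Qed.

Lemma size_undup_count (s U : seq nat) :
  uniq U -> {subset s <= U} -> size (undup s) = count (mem s) U.
Proof.
move=> uU sU.
have hp : perm_eq (undup s) [seq c <- U | c \in s].
  apply: uniq_perm; rewrite ?undup_uniq ?filter_uniq // => x.
  rewrite mem_undup mem_filter; case hx: (x \in s) => //=; by rewrite sU.
by rewrite (perm_size hp) size_filter.
Qed.

Lemma reduce (k n : nat) (T : finType) (e : rel T) (L : T -> seq nat)
  (p : T -> 'I_k) (i : 'I_k) (c : nat) :
  2 * k + 2 <= n ->
  simple_graph e ->
  #|T| = n ->
  (forall x y, e x y = (p x != p y)) ->
  (forall v, ceil3 (n + k - 1) <= list_size (L v)) ->
  ~ L_colorable e L ->
  (forall (T' : finType) (e' : rel T'),
      simple_graph e' -> #|T'| < n -> choosable e' (ohba_bound e')) ->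
  #|[set v | (p v == i) && (c \in L v)]| <= 2.
Proof.
move=> hn [eirr esy] hT pe hL hnc hmin.
set S := [set v | (p v == i) && (c \in L v)].
rewrite leqNgt; apply/negP => hS.
pose T' := {x : T | x \notin S}.
pose e' : rel T' := fun x y => e (val x) (val y).
have se' : simple_graph e'.
  by split; [move=> x; exact: eirr | move=> x y; exact: esy].
have cT' : #|{: T'}| = n - #|S|.
  rewrite card_sig -hT -(cardC S); apply: esym; rewrite addKn.
  by apply: eq_card => x; rewrite !inE.
have hch : chi e' <= k.
  apply: chi_le; apply/existsP; exists [ffun x => p (val x)].
  apply/forallP => x; apply/forallP => y; apply/implyP.
  by rewrite /e' pe !ffunE.
have hb : ohba_bound e' <= ceil3 (n + k - 1) - 1.
  rewrite /ohba_bound geq_max /ceil3 cT'; apply/andP; split.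
    lia.
  have : #|S| <= n by rewrite -hT max_card.
  lia.
pose L' (x : T') := [seq y <- L (val x) | y != c].
have hL' : forall v, ohba_bound e' <= list_size (L' v).
  move=> v; apply: leq_trans hb _.
  rewrite /L'; have := hL (val v); have := list_size_filter (L (val v)) c; lia.
have [f' [pf' mf']] := hmin T' e' se' (ltac:(rewrite cT'; lia)) L' hL'.
apply: hnc.
pose f (x : T) := odflt c (omap f' (insub x : option T')).
have fS : forall x, x \in S -> f x = c.
  by move=> x xS; rewrite /f insubN // negbK.
have fnS : forall x (h : x \notin S), f x = f' (Sub x h).
  by move=> x h; rewrite /f insubT.
have f'c : forall y, f' y != c.
  by move=> y; have := mf' y; rewrite mem_filter => /andP [].
exists f; split.
  move=> x y exy.
  case: (boolP (x \in S)) => xS; case: (boolP (y \in S)) => yS.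
  - move: exy; rewrite pe.
    by move: xS yS; rewrite !inE => /andP [/eqP -> _] /andP [/eqP -> _]; rewrite eqxx.
  - by rewrite (fS x xS) (fnS y yS) eq_sym f'c.
  - by rewrite (fS y yS) (fnS x xS) f'c.
  - rewrite (fnS x xS) (fnS y yS); apply: pf'; exact: exy.
move=> v; case: (boolP (v \in S)) => vS.
  by rewrite fS //; move: vS; rewrite inE => /andP [].
by rewrite (fnS v vS); have := mf' (Sub v vS); rewrite mem_filter => /andP [].
Qed.

Lemma sum_const_seq (U : seq nat) (a : nat) : \sum_(c <- U) a = a * size U.
Proof. elim: U => [|c U IH]; rewrite ?big_nil ?big_cons /= ?muln0 // IH mulnS //. Qed.

Theorem lemma13 (k n : nat) (T : finType) (e : rel T) (L : T -> seq nat) :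
  1 <= k ->
  2 * k + 2 <= n ->
  simple_graph e ->
  #|T| = n ->
  complete_multipartite e k ->
  (forall v, ceil3 (n + k - 1) <= list_size (L v)) ->
  ~ L_colorable e L ->
  size (undup (flatten [seq L v | v <- enum T])) <= n - 1 ->
  (forall (T' : finType) (e' : rel T'),
      simple_graph e' -> #|T'| < n -> choosable e' (ohba_bound e')) ->
  alpha e <= 4.
Proof.
move=> hk hn sg hT [p [psurj pe]] hL hnc hU hmin.
set U := undup (flatten [seq L v | v <- enum T]) in hU.
set m := ceil3 (n + k - 1) in hL.
have part : forall i : 'I_k, #|[pred v | p v == i]| * m <= 2 * size U.
  move=> i; rewrite -sum_nat_const.
  apply: (@leq_trans (\sum_(v in [pred v | p v == i]) list_size (L v))); first by apply: leq_sum => v _; exact: hL.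
  have eq1 : forall v, list_size (L v) = \sum_(c <- U | c \in L v) 1.
    move=> v; rewrite sum1_count /list_size; apply: size_undup_count.
      exact: undup_uniq.
    move=> x xL; rewrite mem_undup; apply/flatten_mapP; exists v => //.
    by rewrite mem_enum.
  under eq_bigr => v _ do rewrite eq1.
  rewrite (exchange_big_dep predT) //=.
  apply: leq_trans (_ : \sum_(c <- U) 2 <= _); last by rewrite sum_const_seq.
  apply: leq_sum => c _; rewrite sum1dep_card.
  have := @reduce k n T e L p i c hn sg hT pe hL hnc hmin; apply: leq_trans.
  by rewrite leq_eqVlt; apply/orP; left; apply/eqP; apply: eq_card => v; rewrite !inE.
have hm : n + k - 1 <= 3 * m by rewrite /m /ceil3; lia.
have le5 : forall i : 'I_k, #|[pred v | p v == i]| <= 5.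
  move=> i; have h := part i; rewrite leqNgt; apply/negP => h6.
  have := leq_mul h6 (leqnn m); lia.
have nle : n <= 5 * k.
  rewrite -hT -sum1_card (partition_big p predT) //=.
  apply: leq_trans (_ : \sum_(j : 'I_k) 5 <= _); last by rewrite sum_nat_const card_ord mulnC.
  apply: leq_sum => j _; rewrite sum1_card.
  apply: leq_trans (le5 j); by rewrite leq_eqVlt; apply/orP; left; apply/eqP; apply: eq_card => v; rewrite !inE.
have le4 : forall i : 'I_k, #|[pred v | p v == i]| <= 4.
  move=> i; have h := part i; rewrite leqNgt; apply/negP => h5.
  have := leq_mul h5 (leqnn m); lia.
apply/bigmax_leqP => S hS.
case: (set_0Vmem S) => [->|[x xS]]; first by rewrite cards0.
apply: leq_trans (le4 (p x)); apply: subset_leq_card; apply/subsetP => y yS.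
rewrite inE; move/forallP: hS => /(_ x) /implyP /(_ xS) /forallP /(_ y) /implyP /(_ yS).
by rewrite pe negbK eq_sym.
Qed.
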